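(* Let $(\mathcal{C},\mathcal{B},Q,S)$ be an STV election, counted by the procedure described in the context. Let $w\in\mathcal{C}$ and $O\subseteq\mathcal{C}$, and suppose that $L_{\mathrm{basic}}(w)>U_{\mathrm{comp}}(o,w)$ (the assertion $\mathsf{AG}(w,o)$) holds for every $o\in O$. Then $L_{\mathrm{elim}}(w,O)$ is a lower bound on the tally of $w$ at any point of the count at which $w$ could be eliminated.
   Context: An STV election is a tuple $(\mathcal{C},\mathcal{B},Q,S)$ where $\mathcal{C}$ is a finite set of candidates, $\mathcal{B}$ is a multiset of ballots (each ballot is a finite sequence of distinct candidates, in order of preference, most preferred first, not necessarily containing all candidates), $S$ is the number of seats, and $Q=\lfloor |\mathcal{B}|/(S+1)\rfloor+1$ is the quota. For a sequence $\pi$, $\mathrm{first}(\pi)$ is its first element, and for a set $X$ of candidates, $\sigma_X(\pi)$ is the subsequence of $\pi$ consisting of the elements of $X$, in their original order. Counting: every ballot starts with value $1$ and is placed in the pile of its first-ranked candidate; a candidate's tally is the total value of the ballots in its pile. A candidate is eligible if neither eliminated nor seated. In each round every eligible candidate with tally at least $Q$ is seated (gets a quota), and the ballots in its pile get a reduced transfer value (e.g. unweighted Gregory: $(V_c-Q)/|\mathcal{B}_c|$, with $V_c$ the total value and $|\mathcal{B}_c|$ the number of ballots in its pile) and move to the next-ranked eligible candidate on each ballot (or are exhausted). If no candidate reaches a quota, the eligible candidate with smallest tally is eliminated and its ballots move at their current value to their next-ranked eligible candidate (or are exhausted). Counting stops when all $S$ seats are filled or the number of eligible candidates equals the number of unfilled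 seats, in which case all remaining eligible candidates are seated. Definitions (counts with multiplicity): $L_{\mathrm{basic}}(c)=|\{\beta\in\mathcal{B}:\mathrm{first}(\beta)=c\}|$; $U_{\mathrm{comp}}(c,c')=|\{\beta\in\mathcal{B}:\mathrm{first}(\sigma_{\{c,c'\}}(\beta))=c\}|$; $L_{\mathrm{elim}}(w,O)=|\{\beta\in\mathcal{B}:\mathrm{first}(\sigma_{\mathcal{C}\setminus O}(\beta))=w\}|$. *)

(* Defs.v *)
From mathcomp Require Import all_boot all_order all_algebra.
Set Implicit Arguments. Unset Strict Implicit. Unset Printing Implicit Defensive.
Import Order.TTheory GRing.Theory Num.Theory.

Section STV.
Variable C : finType.
Variable B : seq (seq C).        (* the multiset of ballots, as a list (multiplicity = repetition) *)
Variable S : nat.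

Definition valid_ballots : bool := all uniq B.

Definition nB := size B.
Definition ballot (i : 'I_nB) : seq C := nth [::] B i.

Definition quota : nat := (nB %/ S.+1).+1.

Definition first (s : seq C) : option C := ohead s.
Definition sigma (X : pred C) (s : seq C) : seq C := [seq x <- s | X x].

Definition L_basic (c : C) : nat := count (fun b => first b == Some c) B.
Definition U_comp (c c' : C) : nat :=
  count (fun b => first (sigma (mem [:: c; c']) b) == Some c) B.
Definition L_elim (w : C) (O : {set C}) : nat :=
  count (fun b => first (sigma (fun x => x \notin O) b) == Some w) B.

Record state := State {
  elimd : C -> bool;
  seatd : C -> bool;
  pile  : 'I_nB -> option C;       (* pile the ballot currently sits in (None = exhausted) *)
  bval  : 'I_nB -> rat
}.

Definition eligible (st : state) (c : C) : bool := ~~ elimd st c && ~~ seatd st c.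

Definition stv_tally (st : state) (c : C) : rat :=
  \sum_(i < nB | pile st i == Some c) bval st i.

Definition pile_size (st : state) (c : C) : nat :=
  #|[set i : 'I_nB | pile st i == Some c]|.

Definition next_elig (elim seat : C -> bool) (b : seq C) (c : C) : option C :=
  ohead [seq x <- drop (index c b).+1 b | ~~ elim x && ~~ seat x].

Definition init_state : state :=
  State (fun _ => false) (fun _ => false) (fun i => ohead (ballot i)) (fun _ => 1%R).

Definition n_seated (st : state) : nat := #|[set c | seatd st c]|.
Definition n_eligible (st : state) : nat := #|[set c | eligible st c]|.

Definition stopped (st : state) : bool :=
  (S <= n_seated st) || (n_eligible st == S - n_seated st).

Definition reaches_quota (st : state) (c : C) : bool :=
  eligible st c && ((quota%:R : rat) <= stv_tally st c)%R.

(* a round in which every eligible candidate with stv_tally >= Q is seated;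
   unweighted Gregory transfer value (V_c - Q)/|B_c| *)
Definition seat_round (st : state) : state :=
  let E := reaches_quota st in
  let seat' := fun c => seatd st c || E c in
  State (elimd st) seat'
    (fun i => match pile st i with
              | Some c => if E c then next_elig (elimd st) seat' (ballot i) c
                          else Some c
              | None => None end)
    (fun i => match pile st i with
              | Some c => if E c then
                  ((stv_tally st c - quota%:R) / (pile_size st c)%:R)%R
                  else bval st i
              | None => bval st i end).

Definition elim_round (st : state) (e : C) : state :=
  let elim' := fun c => elimd st c || (c == e) in
  State elim' (seatd st)
    (fun i => match pile st i with
              | Some c => if c == e then next_elig elim' (seatd st) (ballot i) c
                          else Some c
              | None => None end)
    (bval st).

Definition can_be_eliminated (st : state) (e : C) : Prop :=
  ~~ stopped st /\
  (forall c, ~~ reaches_quota st c) /\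
  eligible st e /\
  (forall c, eligible st c -> (stv_tally st e <= stv_tally st c)%R).

Inductive step : state -> state -> Prop :=
| step_seat st : ~~ stopped st -> (exists c, reaches_quota st c) ->
    step st (seat_round st)
| step_elim st e : can_be_eliminated st e -> step st (elim_round st e).

Inductive reachable : state -> Prop :=
| reach_init : reachable init_state
| reach_step st st' : reachable st -> step st st' -> reachable st'.

End STV.

Arguments stv_tally [C] B st c.
Arguments reachable [C] B S _.
Arguments can_be_eliminated [C] B S st e.

(* Main.v *)
Require Import Defs.
From mathcomp Require Import all_boot all_order all_algebra.
From mathcomp Require Import lra.
Set Implicit Arguments. Unset Strict Implicit. Unset Printing Implicit Defensive.
Import Order.TTheory GRing.Theory Num.Theory.

Section Seqs.
Variable C : eqType.

Lemma filter_head (P : pred C) d y :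
  ohead (filter P d) = Some y ->
  [/\ y \in d, P y & forall z, z \in d -> P z -> (index y d <= index z d)%N].
Proof.
elim: d => [|a d IH] //=.
case Pa: (P a) => /=.
  by case=> <-; split; rewrite ?mem_head // => z _ _; rewrite eqxx.
move=> /IH [yd Py H]; split; rewrite ?inE ?yd ?orbT //.
have ya : (a == y) = false by apply/negbTE; apply: contraFN Pa => /eqP ->.
move=> z; rewrite inE => /orP [/eqP -> |zd Pz]; first by rewrite Pa.
have za : (a == z) = false by apply/negbTE; apply: contraFN Pa => /eqP ->.
by rewrite ya za ltnS H.
Qed.

Lemma filter_none (P : pred C) d :
  ohead (filter P d) = None -> forall z, z \in d -> ~~ P z.
Proof.
move=> H z zd; apply/negP => Pz.
have : z \in filter P d by rewrite mem_filter Pz zd.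
by case: (filter P d) H.
Qed.

Lemma index_drop (b : seq C) k z : uniq b -> z \in drop k b ->
  index z b = (minn k (size b) + index z (drop k b))%N.
Proof.
move=> ub zd.
have := ub; rewrite -{1}(cat_take_drop k b) cat_uniq => /and3P [_ hn _].
have zt : z \notin take k b.
  apply: contra hn => zt; apply/hasP; by exists z.
by rewrite -{1}(cat_take_drop k b) index_cat (negbTE zt) size_take_min.
Qed.

Lemma in_drop (b : seq C) k z : z \in b -> (k <= index z b)%N -> z \in drop k b.
Proof.
move=> zb le.
have : z \in take k b ++ drop k b by rewrite cat_take_drop.
rewrite mem_cat => /orP [zt|//].
have : index z b = index z (take k b).
  by rewrite -{1}(cat_take_drop k b) index_cat zt.
have := index_mem z (take k b); rewrite zt => lt.
move=> E; move: le; rewrite E => le.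
rewrite size_take_min in lt.
have := leq_trans (leq_ltn_trans le lt) (geq_minl k (size b)).
by rewrite ltnn.
Qed.

Lemma index_lt_ne (b : seq C) x w : x \in b -> x != w ->
  (index x b <= index w b)%N -> (index x b < index w b)%N.
Proof.
elim: b => [|a b IH] //=; rewrite inE.
case: (eqVneq a x) => [->|ax] /=.
  by move=> _ /negbTE ->.
move=> xb xw; case: (a == w) => //; rewrite !ltnS; exact: IH.
Qed.

Lemma first_sigma2 (b : seq C) x w : x \in b -> x != w ->
  (index x b <= index w b)%N ->
  ohead [seq y <- b | y \in [:: x; w]] = Some x.
Proof.
elim: b => [|a b IH] //=; rewrite inE.
case: (eqVneq a x) => [->|ax] /=.
  by rewrite mem_head.
move=> xb xw; case: (eqVneq a w) => // aw.
rewrite ltnS !inE (negbTE aw) (negbTE ax) /= => le; exact: IH.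
Qed.

End Seqs.

Section Next.
Variable C : finType.
Implicit Types (elim seat : C -> bool) (b : seq C).

Lemma next_elig_spec elim seat b c y : uniq b -> c \in b ->
  next_elig elim seat b c = Some y ->
  [/\ y \in b, (index c b < index y b)%N & ~~ elim y && ~~ seat y].
Proof.
rewrite /next_elig => ub cb /filter_head [yd Py _]; split => //.
  exact: mem_drop yd.
rewrite (index_drop ub yd).
have : (index c b).+1 <= size b by rewrite index_mem.
by move/minn_idPl => ->; rewrite addSn ltnS leq_addr.
Qed.

Lemma next_elig_le elim seat b c y w : uniq b -> c \in b ->
  next_elig elim seat b c = Some y -> ~~ elim w && ~~ seat w ->
  (index c b < index w b)%N -> (index y b <= index w b)%N.
Proof.
move=> ub cb H Pw lt.
have [yb _ _] := next_elig_spec ub cb H.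
case wb: (w \in b); last first.
  by rewrite (memNindex (negbT wb)) ltnW // index_mem.
have wd : w \in drop (index c b).+1 b by apply: in_drop.
move: H; rewrite /next_elig => /filter_head [yd Py Hm].
rewrite (index_drop ub yd) (index_drop ub wd) leq_add2l.
exact: Hm.
Qed.

Lemma next_elig_some elim seat b c w : w \in b ->
  (index c b < index w b)%N -> ~~ elim w && ~~ seat w ->
  next_elig elim seat b c <> None.
Proof.
move=> wb lt Pw H.
have wd : w \in drop (index c b).+1 b by apply: in_drop.
by have := filter_none H wd; rewrite Pw.
Qed.

End Next.

Section Main.
Variables (C : finType) (B : seq (seq C)) (S : nat) (w : C) (O : {set C}).

Local Open Scope ring_scope.

Definition special (b : seq C) : bool :=
  first (sigma (fun x => x \notin O) b) == Some w.

Definition Inv (st : state B) : Prop :=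
  (forall i, 0 <= bval st i <= 1) /\
  (forall i x, pile st i = Some x -> eligible st x /\ x \in ballot i) /\
  (eligible st w ->
    (forall i x, pile st i = Some x -> (index x (ballot i) <= index w (ballot i))%N) /\
    (forall i, special (ballot i) -> bval st i = 1 /\ pile st i != None)).

Lemma uniq_ballot : valid_ballots B -> forall i : 'I_(nB B), uniq (ballot i).
Proof. by move=> v i; apply: (all_nthP [::] v); exact: ltn_ord. Qed.

Lemma wnotO : (forall o, o \in O -> (U_comp B o w < L_basic B w)%N) -> w \notin O.
Proof.
move=> AG; apply/negP => wO; have := AG w wO.
suff : (L_basic B w <= U_comp B w w)%N by move=> h1 h2; have := leq_ltn_trans h1 h2; rewrite ltnn.
apply: sub_count => b /=; case: b => //= a l /eqP [->].
by rewrite /sigma /= inE eqxx.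
Qed.

Lemma special_in b x : special b -> x \in b ->
  (index x b <= index w b)%N -> x \in O \/ x = w.
Proof.
rewrite /special /first /sigma => /eqP /filter_head [wb wO H] xb le.
case xO: (x \in O); first by left.
right; have := H x xb (negbT xO) => le2.
have e : index x b = index w b by apply/eqP; rewrite eqn_leq le le2.
by rewrite -(nth_index x xb) e nth_index.
Qed.

Lemma count_sum (P : pred (seq C)) :
  (count P B)%:R = \sum_(i < nB B) (P (ballot i))%:R :> rat.
Proof.
rewrite -sum1_count (big_nth [::]) big_mkord natr_sum big_mkcond /=.
by apply: eq_bigr => i _; case: (P _).
Qed.

Lemma tally_ge (st : state B) (P : pred (seq C)) :
  (forall i, 0 <= bval st i <= 1) ->
  (forall i, P (ballot i) -> pile st i = Some w /\ bval st i = 1) ->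
  (count P B)%:R <= stv_tally B st w.
Proof.
move=> A H; rewrite count_sum /stv_tally [X in _ <= X]big_mkcond /=; apply: ler_sum => i _.
case Pi: (P _).
  by have [-> ->] := H i Pi; rewrite eqxx.
by case: eqP => _ //; have /andP [] := A i.
Qed.

Lemma tally_le_U (st : state B) x : valid_ballots B -> Inv st -> eligible st w -> x != w ->
  stv_tally B st x <= (U_comp B x w)%:R.
Proof.
move=> v [A [Bi Ci]] ew xw; have [Cw _] := Ci ew.
rewrite /U_comp count_sum /stv_tally [X in X <= _]big_mkcond /=; apply: ler_sum => i _.
case: eqP => [H|_]; last by rewrite ler0n.
have [_ xb] := Bi i x H.
have -> : first (sigma (mem [:: x; w]) (ballot i)) == Some x.
  by apply/eqP; apply: first_sigma2 => //; exact: Cw H.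
by have /andP [] := A i.
Qed.

Hypothesis valid : valid_ballots B.
Hypothesis AG : forall o, o \in O -> (U_comp B o w < L_basic B w)%N.

Lemma basic_le (st : state B) : Inv st -> eligible st w ->
  (L_basic B w)%:R <= stv_tally B st w.
Proof.
move=> [A [Bi Ci]] ew; have [Cw Dw] := Ci ew.
apply: tally_ge => // i.
case E: (ballot i) => [|a l] //= /eqP [aw]; subst a.
have sp : special (ballot i).
  by rewrite E /special /sigma /= (negbTE (wnotO AG)).
have [-> pn] := Dw i sp; split => //.
case P: (pile st i) pn => [x|] // _.
have := Cw i x P; rewrite E /= eqxx.
by case: eqP => [->|].
Qed.

Lemma lt_tally (st : state B) x : Inv st -> eligible st w -> x \in O ->
  stv_tally B st x < stv_tally B st w.
Proof.
move=> I ew xO.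
have xw : x != w by apply: contraNneq (wnotO AG) => <-.
apply: (le_lt_trans (tally_le_U valid I ew xw)).
apply: (lt_le_trans _ (basic_le I ew)).
by rewrite ltr_nat; apply: AG.
Qed.

Lemma inv_init : Inv (init_state B).
Proof. rewrite /Inv /init_state /eligible /=.
split.
 by move=> i; exact: lexx.
split.
  move=> i x /=; case: (ballot i) => //= a l [<-]; split => //; exact: mem_head.
move=> _; split.
  by move=> i x /=; case: (ballot i) => //= a l [<-]; rewrite eqxx.
by move=> i; rewrite /special /sigma /first; case: (ballot i).
Qed.

Lemma gregory (st : state B) c : (forall i, 0 <= bval st i <= 1) ->
  reaches_quota S st c ->
  0 <= (stv_tally B st c - (quota B S)%:R) / (pile_size st c)%:R <= 1.
Proof.
move=> A /andP [_ q].
have hs : stv_tally B st c <= (pile_size st c)%:R.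
  rewrite /pile_size -sum1_card natr_sum /stv_tally big_mkcond [X in _ <= X]big_mkcond /=.
  apply: ler_sum => i _; rewrite inE; case: eqP => _ //.
  by have /andP [] := A i.
move: q hs; set t := stv_tally B st c; set s := pile_size st c => q hs.
have q0 : 0 <= (quota B S)%:R :> rat := ler0n _ _.
case: (posnP s) => [s0|sp].
  by rewrite s0 invr0 mulr0 lexx ler01.
have sp' : 0 < s%:R :> rat by rewrite ltr0n.
apply/andP; split.
  by apply: divr_ge0; [rewrite subr_ge0 | exact: ler0n].
rewrite ler_pdivrMr // mul1r; lra.
Qed.

Lemma inv_seat (st : state B) : Inv st -> Inv (seat_round S st).
Proof.
move=> I; have I' := I; move: I' => [A [Bi Ci]].
split.
  move=> i; rewrite /seat_round /=; case P: (pile st i) => [c|] //; case: ifP => Ec //.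
  exact: gregory.
split.
  move=> i y; rewrite /seat_round /=; case P: (pile st i) => [c|] //; case: ifP => Ec.
    move=> N; have [ec cb] := Bi i c P.
    by have [yb _ ey] := next_elig_spec (uniq_ballot valid i) cb N.
  move=> [<-]; have [ec cb] := Bi i c P; split => //.
  by rewrite /eligible /= Ec orbF.
rewrite /eligible /= negb_or => /andP [h1 /andP [h2 h3]].
have ew : eligible st w by rewrite /eligible h1 h2.
have Ew := negbTE h3.
have [Cw Dw] := Ci ew.
split.
  move=> i y; rewrite /seat_round /=; case P: (pile st i) => [c|] //; case: ifP => Ec.
    move=> N; have [_ cb] := Bi i c P.
    have cw : c != w by apply/eqP => cw; rewrite cw Ew in Ec.
    apply: (next_elig_le (uniq_ballot valid i) cb N).
      by rewrite /= h1 negb_or h2 h3.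
    exact: index_lt_ne cb cw (Cw i c P).
  by move=> [<-]; exact: Cw i c P.
move=> i sp; have [bv pn] := Dw i sp; rewrite /seat_round /=.
case P: (pile st i) pn => [x|] // _; case: ifP => Ex; last by rewrite bv.
exfalso; have [_ xb] := Bi i x P.
have xw : x != w by apply/eqP => xw; rewrite xw Ew in Ex.
have [xO|xw'] := special_in sp xb (Cw i x P); last by rewrite xw' eqxx in xw.
have lt := lt_tally I ew xO.
move: Ex; rewrite /reaches_quota => /andP [_ q].
have : reaches_quota S st w by rewrite /reaches_quota ew (le_trans q (ltW lt)).
by rewrite Ew.
Qed.

Lemma inv_elim (st : state B) e : Inv st -> Inv (elim_round st e).
Proof.
move=> I; have I' := I; move: I' => [A [Bi Ci]].
split; first by move=> i; exact: A i.
split.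
  move=> i y; rewrite /elim_round /=; case P: (pile st i) => [c|] //; case: ifP => ce.
    move=> N; have [ec cb] := Bi i c P.
    by have [yb _ ey] := next_elig_spec (uniq_ballot valid i) cb N.
  move=> [<-]; have [ec cb] := Bi i c P; split => //.
  by rewrite /eligible /= ce orbF.
rewrite /eligible /= negb_or => /andP [/andP [h1 h2] h3].
have ew : eligible st w by rewrite /eligible h1 h3.
have [Cw Dw] := Ci ew.
have Pw : ~~ (elimd st w || (w == e)) && ~~ seatd st w by rewrite negb_or h1 h2 h3.
split.
  move=> i y; rewrite /elim_round /=; case P: (pile st i) => [c|] //; case: ifP => ce.
    move=> N; have [_ cb] := Bi i c P.
    have cw : c != w by apply/eqP => cw; move: h2; rewrite -cw ce.
    apply: (next_elig_le (uniq_ballot valid i) cb N) => //.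
    exact: index_lt_ne cb cw (Cw i c P).
  by move=> [<-]; exact: Cw i c P.
move=> i sp; have [bv pn] := Dw i sp; rewrite /elim_round /=; split => //.
case P: (pile st i) pn => [x|] // _; case: ifP => xe //.
have [_ xb] := Bi i x P.
have xw : x != w by apply/eqP => xw; move: h2; rewrite -xw xe.
have wb : w \in ballot i by move: sp; rewrite /special /first /sigma => /eqP /filter_head [].
apply/eqP; apply: (next_elig_some wb) => //.
exact: index_lt_ne xb xw (Cw i x P).
Qed.

Lemma inv_reach (st : state B) : reachable B S st -> Inv st.
Proof.
elim => [|s1 s2 _ IH stp]; first exact: inv_init.
case: s1 s2 / stp IH => [s _ _|s e _] IH; [exact: inv_seat | exact: inv_elim].
Qed.

End Main.

Theorem lemma3 (C : finType) (B : seq (seq C)) (S : nat) (w : C) (O : {set C}) :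
  valid_ballots B ->
  (forall o, o \in O -> (U_comp B o w < L_basic B w)%N) ->
  forall st : state B, reachable B S st -> can_be_eliminated B S st w ->
  ((L_elim B w O)%:R <= stv_tally B st w)%R.
Proof.
move=> v AG st R [_ [_ [ew minw]]].
have I := inv_reach v AG R.
have I' := I; move: I' => [A [Bi Ci]]; have [Cw Dw] := Ci ew.
apply: (tally_ge (P := special w O) A) => i sp.
have [bv pn] := Dw i sp; split => //.
case P: (pile st i) pn => [x|] // _.
have [ex xb] := Bi i x P.
have [xO|-> //] := special_in sp xb (Cw i x P).
have lt := lt_tally v AG I ew xO.
have := minw x ex.
by rewrite leNgt lt.
Qed.
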